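(* Let $T=(p,q:F\to E)$ be an LR textile system whose associated 2-graph $\Lambda=\Lambda_T$ is row-finite and essential. Let $\mathcal G=\{\mathcal G^i_z: z\in\Lambda^0,\ 1\le i\le m(z)\}$ be a 2-graph insplitting partition of $\Lambda$, let $\Lambda_I$ be the resulting insplit 2-graph, and let $T_I=T_{\Lambda_I}$ be its associated textile system. Then there are textile systems $T_A,T_B,T_C,T_D$ such that $T_A$ is a textile (Johnson--Madden) insplit of $T$, $T_B=\widehat{T_A}$, $T_C$ is a textile insplit of $T_B$, and $T_D=\widehat{T_C}$, and such that, after a bijective relabeling of alphabets, the shift spaces $\mathsf X^+_{T_D}$ and $\mathsf X^+_{T_I}$ coincide (i.e. $T_D$ and $T_I$ give rise to identical tilings of $\mathbb R_{\ge 0}^2$). In particular $\mathsf X^+_{T}$ and $\mathsf X^+_{T_I}$ are conjugate, so 2-graph insplitting induces a conjugacy of the associated one-sided 2-dimensional shifts of finite type.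
   Context: $\mathbb N=\{0,1,2,\dots\}$; $\varepsilon_1,\varepsilon_2$ are the standard generators of $\mathbb N^2$. A directed graph $E=(E^0,E^1,r,s)$ has vertices $E^0$, edges $E^1$, range and source maps $r,s:E^1\to E^0$; for $v\in E^0$, $vE^1=r^{-1}(v)$. A graph homomorphism $p:F\to E$ is a pair of maps $F^0\to E^0$, $F^1\to E^1$ (both written $p$) with $r(p(f))=p(r(f))$, $s(p(f))=p(s(f))$. A textile system $T=(p,q:F\to E)$ consists of directed graphs $F,E$ and graph homomorphisms $p,q:F\to E$ such that $f\mapsto(r(f),p(f),s(f),q(f))$ is injective on $F^1$. $p$ has unique $r$-path lifting if for all $v\in F^0$, $e\in E^1$ with $p(v)=r(e)$ there is exactly one $f\in F^1$ with $r(f)=v$, $p(f)=e$; unique $s$-path lifting is defined analogously with $s$. $T$ is LR if $p$ has unique $r$-path lifting and $q$ has unique $s$-path lifting. Shift space: $\mathsf X^+_T=\{x:\mathbb N^2\to F^1 : s(x_n)=r(x_{n+\varepsilon_1}),\ p(x_n)=q(x_{n+\varepsilon_2})\ \forall n\in\mathbb N^2\}$ with the product topology ($F^1$ discrete) and shift action $(\sigma^m x)_n=x_{n+m}$, $m\in\mathbb N^2$. Two such spaces are conjugate if there is a homeomorphism $h$ between them with $h\circ\sigma^m=\sigma^m\circ h$ for all $m\in\mathbb N^2$. Directed-graph insplitting: given, for each $v\in F^0$, a partition of $vF^1$ into nonempty sets $\mathcal F_v^1,\dots,\mathcal F_v^{m(v)}$, the insplit graph $F_I$ has $F_I^0=\{v^i: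 v\in F^0, 1\le i\le m(v)\}$, $F_I^1=\{f^j: f\in F^1, 1\le j\le m(s(f))\}$, $s(f^j)=s(f)^j$, and $r(f^j)=r(f)^k$ where $f\in\mathcal F^k_{r(f)}$. Textile (Johnson--Madden) insplit of $T$: $T_I=(p_I,q_I:F_I\to E)$ with $p_I(v^i)=p(v)$, $p_I(f^j)=p(f)$, and likewise for $q_I$. Inverted textile system: for $T=(p,q:F\to E)$, $\widehat T=(\hat p,\hat q:\widehat F\to\widehat E)$ where $\widehat E$ has vertices $E^0$, edges $F^0$, range $q|_{F^0}$ and source $p|_{F^0}$; $\widehat F$ has vertices $E^1$, edges $F^1$, range $q|_{F^1}$, source $p|_{F^1}$; $\hat p=(s_E,s_F)$, $\hat q=(r_E,r_F)$. 2-graphs: a 2-graph is a countable category $\Lambda$ with a functor $d:\Lambda\to\mathbb N^2$ such that whenever $d(\lambda)=m+n$ there are unique $\mu,\nu$ with $d(\mu)=m,d(\nu)=n,\lambda=\mu\nu$ (composition $\mu\nu$ defined when $s(\mu)=r(\nu)$). $\Lambda^m=d^{-1}(m)$, $\Lambda^0$ = vertices, $\Lambda^1=\Lambda^{\varepsilon_1}\sqcup\Lambda^{\varepsilon_2}$ (edges of color 1 and 2); $\lambda(m,n)$ denotes the unique factor of degree $n-m$ in position $[m,n]$. Row-finite: $v\Lambda^m$ finite; essential: $v\Lambda^m$ and $\Lambda^m v$ nonempty for all $v,m$. Any 2-graph is the quotient of the path category of its 1-skeleton (2-colored graph $(\Lambda^0,\Lambda^1,r,s)$) by the relation identifying $fg\sim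 g'f'$ when they are the same element of $\Lambda^{\varepsilon_1+\varepsilon_2}$ (commuting squares). The 2-graph $\Lambda_T$ of a textile system: 2-colored graph with vertices $E^0$, color-1 edges $E^1$ (with $r,s$ from $E$) and color-2 edges $F^0$ with $r(w)=q(w)$, $s(w)=p(w)$; commuting squares $ve\sim e'w$ iff there is $f\in F^1$ with $r(f)=v,s(f)=w,p(f)=e,q(f)=e'$; $\Lambda_T$ is the quotient of the path category by the equivalence generated by these squares (compatible with concatenation). For LR $T$ this is a 2-graph, with $\Lambda_T^{\varepsilon_1+\varepsilon_2}$ identified with $F^1$. Conversely, the textile system of a 2-graph $\Lambda$ is $T_\Lambda=(p,q:F_\Lambda\to E_\Lambda)$ with $E_\Lambda=(\Lambda^0,\Lambda^{\varepsilon_1},r,s)$, $F_\Lambda=(\Lambda^{\varepsilon_2},\Lambda^{\varepsilon_1+\varepsilon_2},\lambda\mapsto\lambda(0,\varepsilon_2),\lambda\mapsto\lambda(\varepsilon_1,\varepsilon_1+\varepsilon_2))$, $p(\lambda)=\lambda(\varepsilon_2,\varepsilon_1+\varepsilon_2)$, $q(\lambda)=\lambda(0,\varepsilon_1)$, and on $F_\Lambda^0=\Lambda^{\varepsilon_2}$, $p=s$, $q=r$. 2-graph insplitting: an insplitting partition of $\Lambda$ is, for each $z\in\Lambda^0$, a partition of $z\Lambda^1$ (edges of either color with range $z$) into nonempty sets $\mathcal G^1_z,\dots,\mathcal G^{m(z)}_z$ satisfying the pairing condition: for every $\lambda\in\Lambda^{\varepsilon_1+\varepsilon_2}$, $\lambda(0,\varepsilon_1)$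 and $\lambda(0,\varepsilon_2)$ lie in the same set $\mathcal G^j_{r(\lambda)}$. The insplit 2-graph $\Lambda_I$ is the quotient of the path category of the 2-colored graph with vertices $\{z^i:1\le i\le m(z)\}$, edges $\{f^i: f\in\Lambda^1, 1\le i\le m(s(f))\}$, $d(f^i)=d(f)$, $s(f^i)=s(f)^i$, $r(f^i)=r(f)^j$ where $f\in\mathcal G^j_{r(f)}$, by the commuting squares $f^ig^k\sim_I a^jb^k$ iff $g\in\mathcal G^i_{s(f)}$, $b\in\mathcal G^j_{s(a)}$ and $fg\sim ab$ in $\Lambda$. *)

(* Defs.v *)
From Stdlib Require List.
From mathcomp Require Import all_boot.
Set Implicit Arguments. Unset Strict Implicit. Unset Printing Implicit Defensive.

Record graph := Graph { gV : Type; gE : Type; gr : gE -> gV; gs : gE -> gV }.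

Definition is_hom (F E : graph) (fV : gV F -> gV E) (fE : gE F -> gE E) : Prop :=
  forall f, gr (fE f) = fV (gr f) /\ gs (fE f) = fV (gs f).

Record textile := Textile {
  tF : graph; tE : graph;
  pV : gV tF -> gV tE; pE : gE tF -> gE tE;
  qV : gV tF -> gV tE; qE : gE tF -> gE tE }.

Definition textile_system (T : textile) : Prop :=
  is_hom (@pV T) (@pE T) /\ is_hom (@qV T) (@qE T) /\
  (forall f g : gE (tF T), gr f = gr g -> @pE T f = @pE T g ->
      gs f = gs g -> @qE T f = @qE T g -> f = g).

Definition unique_r_lifting (F E : graph) (fV : gV F -> gV E) (fE : gE F -> gE E) :=
  forall (v : gV F) (e : gE E), fV v = gr e -> exists! f : gE F, gr f = v /\ fE f = e.
Definition unique_s_lifting (F E : graph) (fV : gV F -> gV E) (fE : gE F -> gE E) :=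
  forall (v : gV F) (e : gE E), fV v = gs e -> exists! f : gE F, gs f = v /\ fE f = e.

Definition LR (T : textile) : Prop :=
  unique_r_lifting (@pV T) (@pE T) /\ unique_s_lifting (@qV T) (@qE T).

Definition addN2 (m n : nat * nat) : nat * nat := (m.1 + n.1, m.2 + n.2)%N.

Definition in_shift (T : textile) (x : nat * nat -> gE (tF T)) : Prop :=
  forall n : nat * nat,
    gs (x n) = gr (x (addN2 n (1, 0)%N)) /\ @pE T (x n) = @qE T (x (addN2 n (0, 1)%N)).

(* Continuity for the (subspace topology of the) product topology with
   discrete alphabets: each output coordinate is determined, near x, by
   finitely many input coordinates (those in some box [0,M]^2). *)
Definition contX (A B : Type) (PA : (nat * nat -> A) -> Prop)
    (PB : (nat * nat -> B) -> Prop) (h : {x | PA x} -> {y | PB y}) : Prop :=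
  forall (x : {x | PA x}) (n : nat * nat), exists M : nat,
    forall y : {x | PA x},
      (forall k : nat * nat, (k.1 <= M)%N -> (k.2 <= M)%N -> proj1_sig y k = proj1_sig x k) ->
      proj1_sig (h y) n = proj1_sig (h x) n.

(* X^+_{T1} and X^+_{T2} are conjugate: a homeomorphism h (inverse g)
   with h o sigma^m = sigma^m o h for all m in N^2. *)
Definition conjugate (T1 T2 : textile) : Prop :=
  exists (h : {x | @in_shift T1 x} -> {y | @in_shift T2 y})
         (g : {y | @in_shift T2 y} -> {x | @in_shift T1 x}),
    (forall x n, proj1_sig (g (h x)) n = proj1_sig x n) /\
    (forall y n, proj1_sig (h (g y)) n = proj1_sig y n) /\
    contX h /\ contX g /\
    (forall (m : nat * nat) (x x' : {x | @in_shift T1 x}),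
        (forall n, proj1_sig x' n = proj1_sig x (addN2 n m)) ->
        forall n, proj1_sig (h x') n = proj1_sig (h x) (addN2 n m)).

(* Indices are 0-based: the sets F_v^1..F_v^{m(v)} are indexed by       *)
(* i < m v, and f lies in the block dpc f.                              *)
Record dg_part (G : graph) := DgPart {
  dpm : gV G -> nat;
  dpc : gE G -> nat;
  dpc_lt : forall f, (dpc f < dpm (gr f))%N;
  dp_nonempty : forall v i, (i < dpm v)%N -> exists f, gr f = v /\ dpc f = i }.

Definition insplit_graph (G : graph) (P : dg_part G) : graph :=
  {| gV := {vi : gV G * nat | (vi.2 < dpm P vi.1)%N};
     gE := {fj : gE G * nat | (fj.2 < dpm P (gs fj.1))%N};
     gr := fun fj => exist (fun vi : gV G * nat => (vi.2 < dpm P vi.1)%N)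
                       (gr (proj1_sig fj).1, dpc P (proj1_sig fj).1)
                       (dpc_lt P (proj1_sig fj).1);
     gs := fun fj => exist (fun vi : gV G * nat => (vi.2 < dpm P vi.1)%N)
                       (gs (proj1_sig fj).1, (proj1_sig fj).2)
                       (proj2_sig fj) |}.

Definition tinsplit (T : textile) (P : dg_part (tF T)) : textile :=
  {| tF := insplit_graph P; tE := tE T;
     pV := fun vi => @pV T (proj1_sig vi).1; pE := fun fj => @pE T (proj1_sig fj).1;
     qV := fun vi => @qV T (proj1_sig vi).1; qE := fun fj => @qE T (proj1_sig fj).1 |}.

Definition hat (T : textile) : textile :=
  {| tF := {| gV := gE (tE T); gE := gE (tF T); gr := @qE T; gs := @pE T |};
     tE := {| gV := gV (tE T); gE := gV (tF T); gr := @qV T; gs := @pV T |};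
     pV := @gs (tE T); pE := @gs (tF T);
     qV := @gr (tE T); qE := @gr (tF T) |}.

(* 2-graphs, presented by their 2-coloured 1-skeleton together with    *)
(* the commuting squares.  sq a b c d means the          *)
(* colour-(1,2) path a b (a colour 1, b colour 2) and the colour-(2,1)  *)
(* path c d (c colour 2, d colour 1) are the same element of degree     *)
(* e1+e2.                                                                *)
Record tgraph := TGraph {
  L0 : Type; L1 : Type; L2 : Type;
  r1 : L1 -> L0; s1 : L1 -> L0;
  r2 : L2 -> L0; s2 : L2 -> L0;
  sq : L1 -> L2 -> L2 -> L1 -> Prop }.

(* Lambda^{e1+e2}: one element per commuting square. *)
Definition L11 (L : tgraph) : Type :=
  {t : L1 L * L2 L * L2 L * L1 L | sq t.1.1.1 t.1.1.2 t.1.2 t.2}.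
Definition l01 L (t : L11 L) : L1 L := (proj1_sig t).1.1.1. (* lambda(0,e1) *)
Definition l12 L (t : L11 L) : L2 L := (proj1_sig t).1.1.2. (* lambda(e1,e1+e2) *)
Definition l02 L (t : L11 L) : L2 L := (proj1_sig t).1.2.   (* lambda(0,e2) *)
Definition l21 L (t : L11 L) : L1 L := (proj1_sig t).2.     (* lambda(e2,e1+e2) *)

Definition row_finite (L : tgraph) : Prop :=
  forall z : L0 L,
    (exists l : seq (L1 L), forall e, r1 e = z -> List.In e l) /\
    (exists l : seq (L2 L), forall g, r2 g = z -> List.In g l).
Definition essential (L : tgraph) : Prop :=
  forall z : L0 L,
    (exists e, r1 e = z) /\ (exists e, s1 e = z) /\
    (exists g, r2 g = z) /\ (exists g, s2 g = z).

Definition Lam (T : textile) : tgraph :=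
  {| L0 := gV (tE T); L1 := gE (tE T); L2 := gV (tF T);
     r1 := @gr (tE T); s1 := @gs (tE T); r2 := @qV T; s2 := @pV T;
     sq := fun e' w v e => exists f : gE (tF T),
             gr f = v /\ gs f = w /\ @pE T f = e /\ @qE T f = e' |}.

Definition T_of (L : tgraph) : textile :=
  {| tE := {| gV := L0 L; gE := L1 L; gr := @r1 L; gs := @s1 L |};
     tF := {| gV := L2 L; gE := L11 L; gr := @l02 L; gs := @l12 L |};
     pV := @s2 L; pE := @l21 L;
     qV := @r2 L; qE := @l01 L |}.

(* 2-graph insplitting partitions (0-based block indices; an edge of
   colour 1 (resp. 2) lies in block tc1 f (resp. tc2 g) of z Lambda^1). *)
Record tg_part (L : tgraph) := TgPart {
  tm : L0 L -> nat;
  tc1 : L1 L -> nat;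
  tc2 : L2 L -> nat;
  tc1_lt : forall f, (tc1 f < tm (r1 f))%N;
  tc2_lt : forall g, (tc2 g < tm (r2 g))%N;
  tp_nonempty : forall z j, (j < tm z)%N ->
      (exists f, r1 f = z /\ tc1 f = j) \/ (exists g, r2 g = z /\ tc2 g = j);
  tp_pairing : forall t : L11 L, tc1 (l01 t) = tc2 (l02 t) }.

Definition insplit2 (L : tgraph) (P : tg_part L) : tgraph :=
  {| L0 := {zi : L0 L * nat | (zi.2 < tm P zi.1)%N};
     L1 := {fi : L1 L * nat | (fi.2 < tm P (s1 fi.1))%N};
     L2 := {gi : L2 L * nat | (gi.2 < tm P (s2 gi.1))%N};
     r1 := fun fi => exist (fun zi : L0 L * nat => (zi.2 < tm P zi.1)%N)
                       (r1 (proj1_sig fi).1, tc1 P (proj1_sig fi).1)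
                       (tc1_lt P (proj1_sig fi).1);
     s1 := fun fi => exist (fun zi : L0 L * nat => (zi.2 < tm P zi.1)%N)
                       (s1 (proj1_sig fi).1, (proj1_sig fi).2) (proj2_sig fi);
     r2 := fun gi => exist (fun zi : L0 L * nat => (zi.2 < tm P zi.1)%N)
                       (r2 (proj1_sig gi).1, tc2 P (proj1_sig gi).1)
                       (tc2_lt P (proj1_sig gi).1);
     s2 := fun gi => exist (fun zi : L0 L * nat => (zi.2 < tm P zi.1)%N)
                       (s2 (proj1_sig gi).1, (proj1_sig gi).2) (proj2_sig gi);
     sq := fun fi gk aj bk' =>
       let: (f, i) := proj1_sig fi in let: (g, k) := proj1_sig gk in
       let: (a, j) := proj1_sig aj in let: (b, k') := proj1_sig bk' in
       k = k' /\ (r2 g = s1 f /\ tc2 P g = i) /\ (r1 b = s2 a /\ tc1 P b = j) /\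
       sq f g a b |}.

(* Main.v *)
Require Import Defs.
From mathcomp Require Import all_boot.
From Stdlib Require Import ProofIrrelevance ClassicalEpsilon.
From mathcomp Require Import zify.
Set Implicit Arguments. Unset Strict Implicit. Unset Printing Implicit Defensive.

Lemma sig_bool_ext (A : Type) (Pb : A -> bool) (x y : {a | Pb a}) :
  proj1_sig x = proj1_sig y -> x = y.
Proof. case: x => a ha; case: y => b hb /= e; subst b; by rewrite (bool_irrelevance ha hb). Qed.

Lemma ts_hat T : textile_system T -> textile_system (hat T).
Proof.
case=> [Hp [Hq Hi]]; split; [|split].
- move=> f /=; have [a b] := Hp f; have [c d] := Hq f; by rewrite b d.
- move=> f /=; have [a b] := Hp f; have [c d] := Hq f; by rewrite a c.
- move=> f g /= e1 e2 e3 e4; exact: Hi.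
Qed.

Lemma ts_ins T (P : dg_part (tF T)) : textile_system T -> textile_system (tinsplit P).
Proof.
case=> [Hp [Hq Hi]]; split; [|split].
- move=> [[f i] hi] /=; have [a b] := Hp f; by rewrite a b.
- move=> [[f i] hi] /=; have [a b] := Hq f; by rewrite a b.
- move=> [[f i] hi] [[g j] hj] /= /(congr1 (@proj1_sig _ _)) /= [e1 _] e2
    /(congr1 (@proj1_sig _ _)) /= [e3 e4] e5.
  apply: sig_bool_ext => /=; by rewrite (Hi f g e1 e2 e3 e5) e4.
Qed.

Lemma addN2C n a b : addN2 (addN2 n a) b = addN2 (addN2 n b) a.
Proof. case: n a b => [n1 n2] [a1 a2] [b1 b2]; by rewrite /addN2 /= -!addnA [a1 + _]addnC [a2 + _]addnC. Qed.

Lemma pairF T (P : tg_part (Lam T)) (f : gE (tF T)) : tc1 P (@qE T f) = tc2 P (gr f).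
Proof.
have := tp_pairing P (exist (fun t : L1 (Lam T) * L2 (Lam T) * L2 (Lam T) * L1 (Lam T) =>
          sq t.1.1.1 t.1.1.2 t.1.2 t.2) (((@qE T f, gs f), gr f), @pE T f)
          (ex_intro _ f (conj erefl (conj erefl (conj erefl erefl))))).
by [].
Qed.

Lemma mk_b1 T (HT : textile_system T) (P : tg_part (Lam T)) (f : gE (tF T)) :
  (tc2 P (gs f) < tm P (gs (@qE T f)))%N.
Proof. case: HT => [Hp [Hq Hi]]. have [_ ->] := Hq f. exact: (tc2_lt P (gs f)). Qed.
Lemma mk_b2 T (HT : textile_system T) (P : tg_part (Lam T)) (f : gE (tF T)) :
  (tc1 P (@pE T f) < tm P (@pV T (gr f)))%N.
Proof. case: HT => [Hp [Hq Hi]]. have [<- _] := Hp f. exact: (tc1_lt P (@pE T f)). Qed.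
Lemma mk_b3 T (HT : textile_system T) (P : tg_part (Lam T)) (f : gE (tF T)) k :
  (k < tm P (@pV T (gs f)))%N -> (k < tm P (gs (@pE T f)))%N.
Proof. case: HT => [Hp [Hq Hi]]. by have [_ ->] := Hp f. Qed.
Lemma mk_b3' T (HT : textile_system T) (P : tg_part (Lam T)) (f : gE (tF T)) k :
  (k < tm P (gs (@pE T f)))%N -> (k < tm P (@pV T (gs f)))%N.
Proof. case: HT => [Hp [Hq Hi]]. by have [_ ->] := Hp f. Qed.

Definition mk11 T (HT : textile_system T) (P : tg_part (Lam T)) (f : gE (tF T))
  (k : nat) (hk : (k < tm P (@pV T (gs f)))%N) : L11 (insplit2 P).
Proof.
unfold L11.
refine (exist _ (((exist _ (@qE T f, tc2 P (gs f)) (mk_b1 HT P f), exist _ (gs f, k) hk),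
                  exist _ (gr f, tc1 P (@pE T f)) (mk_b2 HT P f)), exist _ (@pE T f, k) (mk_b3 HT hk)) _).
case: HT => [Hp [Hq Hi]].
simpl. split; first by []. split; first by split; [have [_ ->] := Hq f|].
split; first by split; [have [-> _] := Hp f|].
by exists f.
Defined.
Arguments mk11 {T} HT P f k hk.

Lemma sq_info T (P : tg_part (Lam T)) (t : L11 (insplit2 P)) :
  (proj1_sig (l12 t)).2 = (proj1_sig (l21 t)).2 /\
  (proj1_sig (l01 t)).2 = tc2 P (proj1_sig (l12 t)).1 /\
  (proj1_sig (l02 t)).2 = tc1 P (proj1_sig (l21 t)).1 /\
  exists f : gE (tF T), @qE T f = (proj1_sig (l01 t)).1 /\ gs f = (proj1_sig (l12 t)).1 /\
     gr f = (proj1_sig (l02 t)).1 /\ @pE T f = (proj1_sig (l21 t)).1.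
Proof.
case: t => [[[[[[a i] ha] [[g k] hg]] [[v j] hv]] [[e k'] he]] H].
rewrite /l01 /l12 /l02 /l21 /=.
move: H => /= [-> [[_ ->] [[_ ->] [f [? [? [? ?]]]]]]].
split=> //; split=> //; split=> //; by exists f.
Qed.

Definition base T (P : tg_part (Lam T)) (t : L11 (insplit2 P)) : gE (tF T) :=
  proj1_sig (constructive_indefinite_description _ (proj2 (proj2 (proj2 (sq_info t))))).
Definition kk T (P : tg_part (Lam T)) (t : L11 (insplit2 P)) : nat := (proj1_sig (l12 t)).2.

Lemma decomp T (P : tg_part (Lam T)) (t : L11 (insplit2 P)) :
  proj1_sig (l01 t) = (@qE T (base t), tc2 P (gs (base t))) /\
  proj1_sig (l12 t) = (gs (base t), kk t) /\
  proj1_sig (l02 t) = (gr (base t), tc1 P (@pE T (base t))) /\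
  proj1_sig (l21 t) = (@pE T (base t), kk t).
Proof.
have [e1 [e2 [e3 _]]] := sq_info t.
have [b1 [b2 [b3 b4]]] := proj2_sig (constructive_indefinite_description _ (proj2 (proj2 (proj2 (sq_info t))))).
rewrite /base /kk b1 b2 b3 b4 -e2 -e3 e1.
rewrite -e1; split; [|split; [|split]]; apply: injective_projections => //.
Qed.

Lemma L11_ext T (P : tg_part (Lam T)) (t t' : L11 (insplit2 P)) :
  base t = base t' -> kk t = kk t' -> t = t'.
Proof.
move=> eb ek.
have [d1 [d2 [d3 d4]]] := decomp t.
have [d1' [d2' [d3' d4']]] := decomp t'.
rewrite -eb -ek in d1' d2' d3' d4'.
have E1 : l01 t = l01 t' by apply: sig_bool_ext; rewrite d1 d1'.
have E2 : l12 t = l12 t' by apply: sig_bool_ext; rewrite d2 d2'.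
have E3 : l02 t = l02 t' by apply: sig_bool_ext; rewrite d3 d3'.
have E4 : l21 t = l21 t' by apply: sig_bool_ext; rewrite d4 d4'.
move: E1 E2 E3 E4; clear eb ek d1 d2 d3 d4 d1' d2' d3' d4'; rewrite /l01 /l12 /l02 /l21.
case: t => [[[[a b] c] d] H]; case: t' => [[[[a' b'] c'] d'] H'] /= ????; subst.
by rewrite (proof_irrelevance _ H H').
Qed.

Lemma base_mk11 T (HT : textile_system T) (P : tg_part (Lam T)) f k hk :
  base (mk11 HT P f k hk) = f.
Proof.
have [d1 [d2 [d3 d4]]] := decomp (mk11 HT P f k hk).
move: d1 d2 d3 d4; rewrite /l01 /l12 /l02 /l21 /= => /(congr1 fst) /= e1 /(congr1 fst) /= e2 /(congr1 fst) /= e3 /(congr1 fst) /= e4.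
have [_ [_ Hi]] := HT. apply: Hi; congruence.
Qed.

Lemma kk_mk11 T (HT : textile_system T) (P : tg_part (Lam T)) f k hk :
  kk (mk11 HT P f k hk) = k.
Proof. by []. Qed.

Lemma mk11_ext T (HT : textile_system T) (P : tg_part (Lam T)) f k hk f' k' hk' :
  f = f' -> k = k' -> mk11 HT P f k hk = mk11 HT P f' k' hk'.
Proof. move=> ef ek; subst f' k'; apply: L11_ext; by rewrite ?base_mk11. Qed.

Lemma decompT T (P : tg_part (Lam T)) (t : gE (tF (T_of (insplit2 P)))) :
  proj1_sig (@qE (T_of (insplit2 P)) t) = (@qE T (base t), tc2 P (gs (base t))) /\
  proj1_sig (@gs (tF (T_of (insplit2 P))) t) = (gs (base t), kk t) /\
  proj1_sig (@gr (tF (T_of (insplit2 P))) t) = (gr (base t), tc1 P (@pE T (base t))) /\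
  proj1_sig (@pE (T_of (insplit2 P)) t) = (@pE T (base t), kk t).
Proof. exact: decomp. Qed.

Lemma kk_bound T (HT : textile_system T) (P : tg_part (Lam T)) (t : L11 (insplit2 P)) :
  (kk t < tm P (@pV T (gs (base t))))%N.
Proof.
have [_ [d2 _]] := decomp t.
have := proj2_sig (l12 t). rewrite /= d2 /=. by [].
Qed.

Lemma PA_ne T (HLR : LR T) (Hess : essential (Lam T)) :
  forall (v : gV (tF T)) i, (i < 1)%N -> exists f : gE (tF T), gr f = v /\ 0%N = i.
Proof.
move=> v i; rewrite ltnS leqn0 => /eqP ->.
have [[e He] _] := Hess (@pV T v).
have [f [[h1 h2] _]] := (proj1 HLR) v e (esym He).
by exists f.
Qed.

Definition PA T (HLR : LR T) (Hess : essential (Lam T)) : dg_part (tF T) :=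
  @DgPart (tF T) (fun _ => 1%N) (fun _ => 0%N) (fun _ => isT) (@PA_ne T HLR Hess).

Lemma PC_ne T (HT : textile_system T) (HLR : LR T) (Hess : essential (Lam T)) (P : tg_part (Lam T)) :
  forall (e : gE (tE T)) i, (i < tm P (gs e))%N ->
    exists fj : gE (tF (hat (tinsplit (PA HLR Hess)))),
      @gr (tF (hat (tinsplit (PA HLR Hess)))) fj = e /\ tc2 P (gs (proj1_sig fj).1) = i.
Proof.
move=> e i hi.
have [w [Hw Hc]] : exists w : gV (tF T), @qV T w = gs e /\ tc2 P w = i.
  have [[f1 [hr hc]]|[w [hr hc]]] := @tp_nonempty _ P (gs e) i hi; last by exists w.
  have [_ [_ [[g hg] _]]] := Hess (gs f1).
  have [f [[hf1 hf2] _]] := (proj2 HLR) g f1 hg.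
  exists (gr f); split.
  - have Hq := proj1 (proj2 HT). have [<- _] := Hq f. by rewrite hf2.
  - by rewrite -(pairF P f) hf2.
have [f0 [[h1 h2] _]] := (proj2 HLR) w e Hw.
exists (exist _ (f0, 0%N) isT); by rewrite /= h1.
Qed.

Definition PC T (HT : textile_system T) (HLR : LR T) (Hess : essential (Lam T)) (P : tg_part (Lam T)) :
  dg_part (tF (hat (tinsplit (PA HLR Hess)))) :=
  @DgPart (tF (hat (tinsplit (PA HLR Hess)))) (fun e : gE (tE T) => tm P (gs e))
     (fun fj => tc2 P (gs (proj1_sig fj).1))
     (fun fj => mk_b1 HT P (proj1_sig fj).1) (@PC_ne T HT HLR Hess P).

Definition phi T (HT : textile_system T) (HLR : LR T) (Hess : essential (Lam T)) (P : tg_part (Lam T))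
  (x : gE (tF (hat (tinsplit (PC HT HLR Hess P))))) : gE (tF (T_of (insplit2 P))) :=
  mk11 HT P (proj1_sig (proj1_sig x).1).1 (proj1_sig x).2
     (@mk_b3' T HT P (proj1_sig (proj1_sig x).1).1 (proj1_sig x).2 (proj2_sig x)).
Arguments phi {T} HT HLR Hess P x.

Lemma inj_surj_bij (A B : Type) (f : A -> B) :
  injective f -> (forall y, exists x, f x = y) -> bijective f.
Proof.
move=> fi fs.
exists (fun y => proj1_sig (constructive_indefinite_description _ (fs y))).
- move=> x; apply: fi; exact: (proj2_sig (constructive_indefinite_description _ (fs (f x)))).
- move=> y; exact: (proj2_sig (constructive_indefinite_description _ (fs y))).
Qed.

Lemma phi_bij T (HT : textile_system T) (HLR : LR T) (Hess : essential (Lam T)) (P : tg_part (Lam T)) :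
  bijective (phi HT HLR Hess P).
Proof.
apply: inj_surj_bij.
- move=> [[[[f i] hi] j] hj] [[[[f' i'] hi'] j'] hj'] E.
  have ef := congr1 (@base T P) E. rewrite /phi !base_mk11 /= in ef.
  have ej := congr1 (@kk T P) E. rewrite /phi !kk_mk11 /= in ej.
  clear E; subst f' j'.
  have ei : i = 0%N by have := hi; rewrite /= ltnS leqn0 => /eqP.
  have ei' : i' = 0%N by have := hi'; rewrite /= ltnS leqn0 => /eqP.
  subst i i'.
  apply: sig_bool_ext => /=; congr pair; exact: sig_bool_ext.
- move=> t.
  have hk := kk_bound HT t.
  exists (exist _ (exist _ (base t, 0%N) isT, kk t) (mk_b3 HT hk)).
  apply: L11_ext; by rewrite /phi ?base_mk11 ?kk_mk11.
Qed.

Lemma phi_shift T (HT : textile_system T) (HLR : LR T) (Hess : essential (Lam T)) (P : tg_part (Lam T))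
  (x : nat * nat -> gE (tF (hat (tinsplit (PC HT HLR Hess P))))) :
  in_shift x <-> in_shift (phi HT HLR Hess P \o x).
Proof.
have zero : forall n, (proj1_sig (proj1_sig (x n)).1).2 = 0%N.
  move=> n; case: (x n) => [[[[f i] hi] j] hj] /=. by have := hi; rewrite /= ltnS leqn0 => /eqP.
split => H n.
- have [a b] := H n.
  have [a' _] := H (addN2 n (0, 1)).
  have [_ b'] := H (addN2 n (1, 0)).
  move: a b a' b' => /(congr1 (@proj1_sig _ _)) /= [a1 a2] /(congr1 (@proj1_sig _ _)) /= [b1 b2]
    /(congr1 (@proj1_sig _ _)) /= [a1' _] /(congr1 (@proj1_sig _ _)) /= [b1' _].
  split; apply: sig_bool_ext => /=.
  + rewrite a1 b2 a1' b1' -pairF addN2C. by [].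
  + by rewrite b1 b2.
- have [a b] := H n.
  move: a b => /(congr1 (@proj1_sig _ _)) /= [a1 a2] /(congr1 (@proj1_sig _ _)) /= [b1 b2].
  split; apply: sig_bool_ext => /=.
  + by rewrite a1 !zero.
  + by rewrite b1 b2.
Qed.

Definition kx T (P : tg_part (Lam T)) (x : nat * nat -> gE (tF T)) n : nat :=
  tc1 P (@qE T (x (addN2 (addN2 n (0, 1)) (1, 0)))).

Lemma kx_bound T (HT : textile_system T) (P : tg_part (Lam T)) (x : nat * nat -> gE (tF T))
  (Hx : in_shift x) n : (kx P x n < tm P (@pV T (gs (x n))))%N.
Proof.
have [Hp [Hq _]] := HT.
have [_ e1] := Hx n. have [e2 _] := Hx (addN2 n (0, 1)).
have E : @pV T (gs (x n)) = @qV T (gr (x (addN2 (addN2 n (0, 1)) (1, 0)))).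
  have [_ <-] := Hp (x n). rewrite e1. have [_ ->] := Hq (x (addN2 n (0, 1))). by rewrite e2.
rewrite E /kx. have [<- _] := Hq (x (addN2 (addN2 n (0, 1)) (1, 0))).
exact: (tc1_lt P (@qE T (x (addN2 (addN2 n (0, 1)) (1, 0))))).
Qed.

Definition hfun T (HT : textile_system T) (P : tg_part (Lam T)) (xs : {x | @in_shift T x}) :
  nat * nat -> gE (tF (T_of (insplit2 P))) :=
  fun n => mk11 HT P (proj1_sig xs n) (kx P (proj1_sig xs) n) (kx_bound HT P (proj2_sig xs) n).

Lemma h_in T (HT : textile_system T) (P : tg_part (Lam T)) (xs : {x | @in_shift T x}) :
  in_shift (hfun HT P xs).
Proof.
case: xs => x Hx n. rewrite /hfun /=.
have [a b] := Hx n.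
have [_ b'] := Hx (addN2 n (1, 0)).
have [a' _] := Hx (addN2 n (0, 1)).
split; apply: sig_bool_ext => /=.
- by rewrite a /kx addN2C b'.
- by rewrite b /kx a' pairF.
Qed.

Definition hmap T (HT : textile_system T) (P : tg_part (Lam T)) (xs : {x | @in_shift T x}) :
  {y | @in_shift (T_of (insplit2 P)) y} := exist _ (hfun HT P xs) (h_in HT P xs).

Definition gfun T (P : tg_part (Lam T)) (ys : {y | @in_shift (T_of (insplit2 P)) y}) :
  nat * nat -> gE (tF T) := fun n => base (proj1_sig ys n).

Lemma g_in T (P : tg_part (Lam T)) (ys : {y | @in_shift (T_of (insplit2 P)) y}) :
  in_shift (gfun ys).
Proof.
case: ys => y Hy n. rewrite /gfun /=.
have [a b] := Hy n.
have [_ [d2 _]] := decompT (y n). have [_ [_ [d3 _]]] := decompT (y (addN2 n (1, 0))).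
have [_ [_ [_ d4]]] := decompT (y n). have [d1 _] := decompT (y (addN2 n (0, 1))).
move: a b => /(congr1 (@proj1_sig _ _)) + /(congr1 (@proj1_sig _ _)).
rewrite d2 d3 d4 d1 => -[-> _] [-> _]. by [].
Qed.

Definition gmap T (P : tg_part (Lam T)) (ys : {y | @in_shift (T_of (insplit2 P)) y}) :
  {x | @in_shift T x} := exist _ (gfun ys) (g_in ys).

Lemma conj_main T (HT : textile_system T) (P : tg_part (Lam T)) : conjugate T (T_of (insplit2 P)).
Proof.
exists (hmap HT P), (@gmap T P); split; [|split; [|split; [|split]]].
- move=> x n. by rewrite /= /gfun /hfun /= base_mk11.
- move=> [y Hy] n. rewrite /= /hfun /gfun /=. apply: L11_ext; [by rewrite base_mk11|rewrite kk_mk11].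
  rewrite /kx /=.
  have [a _] := Hy n.
  have [_ [d2 _]] := decompT (y n). have [_ [_ [d3 _]]] := decompT (y (addN2 n (1, 0))).
  have [_ [_ [_ d4]]] := decompT (y (addN2 n (1, 0))).
  have [d1 _] := decompT (y (addN2 (addN2 n (1, 0)) (0, 1))).
  move: a => /(congr1 (@proj1_sig _ _)); rewrite d2 d3 => -[_ ->].
  have [_ c] := Hy (addN2 n (1, 0)); move: c => /(congr1 (@proj1_sig _ _)); rewrite d4 d1 => -[-> _].
  by rewrite /gfun /= addN2C.
- move=> [x Hx] n. exists (n.1 + n.2 + 1)%N => -[y Hy] /= Hxy.
  rewrite /hfun /kx /=. apply: mk11_ext.
  + apply: (Hxy); lia.
  + congr (tc1 P (qE _)). apply: (Hxy); rewrite /addN2 /=; lia.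
- move=> [y Hy] n. exists (n.1 + n.2)%N => -[y' Hy'] /= Hyy.
  rewrite /gfun /=. congr base. apply: (Hyy); lia.
- move=> m [x Hx] [x' Hx'] /= E n. rewrite /hfun /kx /=. apply: mk11_ext.
  + exact: E.
  + by rewrite E (addN2C (addN2 n (0,1)) (1,0) m) (addN2C n (0,1) m).
Qed.

Theorem theorem6p1 (T : textile) (HT : textile_system T) (HLR : LR T)
    (Hrf : row_finite (Lam T)) (Hess : essential (Lam T))
    (P : tg_part (Lam T)) :
  exists PA : dg_part (tF T),
    exists PC : dg_part (tF (hat (tinsplit PA))),
      textile_system (tinsplit PA) /\
      textile_system (hat (tinsplit PA)) /\
      textile_system (tinsplit PC) /\
      textile_system (hat (tinsplit PC)) /\
      (exists phi : gE (tF (hat (tinsplit PC))) -> gE (tF (T_of (insplit2 P))),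
          bijective phi /\
          forall x : nat * nat -> gE (tF (hat (tinsplit PC))),
            in_shift x <-> in_shift (phi \o x)) /\
      conjugate T (T_of (insplit2 P)).
Proof.
exists (PA HLR Hess), (PC HT HLR Hess P).
have h1 := ts_ins (PA HLR Hess) HT.
have h2 := ts_hat h1.
have h3 := ts_ins (PC HT HLR Hess P) h2.
have h4 := ts_hat h3.
do 4 (split; first by []).
split; last exact: conj_main.
exists (phi HT HLR Hess P); split; [exact: phi_bij | exact: phi_shift].
Qed.
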